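(* The group $\mathbb{Z}^\omega$ is the union of a Haar null set and a Haar meager set.
   Context: $\mathbb{Z}^\omega$ is the abelian Polish group of all integer sequences with coordinatewise addition and the product topology (discrete topology on $\mathbb{Z}$). For an abelian Polish group $G$: a set $A\subseteq G$ is Haar null if there exist a Borel set $B\supseteq A$ and a Borel probability measure $\mu$ on $G$ with $\mu(x+B)=0$ for every $x\in G$; a set $A\subseteq G$ is Haar meager if there exist a Borel set $B\supseteq A$, a compact metric space $K$ and a continuous map $f\colon K\to G$ such that $f^{-1}(x+B)$ is meager in $K$ for every $x\in G$. *)

(* Defs.v *)
From Stdlib Require Import Reals ZArith List.
Open Scope R_scope.

Definition Zomega : Type := nat -> Z.

Definition zadd (x y : Zomega) : Zomega := fun i => (x i + y i)%Z.
Definition zsub (x y : Zomega) : Zomega := fun i => (x i - y i)%Z.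

Definition translate (x : Zomega) (B : Zomega -> Prop) : Zomega -> Prop :=
  fun y => B (zsub y x).

(** Open sets of the product topology: basic open sets are cylinders
    determined by finitely many (initial) coordinates. *)
Definition zopen (U : Zomega -> Prop) : Prop :=
  forall x, U x -> exists n : nat,
    forall y, (forall i, (i < n)%nat -> y i = x i) -> U y.

Definition sigma_algebra (S : (Zomega -> Prop) -> Prop) : Prop :=
  S (fun _ => True) /\
  (forall A, S A -> S (fun x => ~ A x)) /\
  (forall A : nat -> Zomega -> Prop, (forall n, S (A n)) ->
     S (fun x => exists n, A n x)).

Definition borel (B : Zomega -> Prop) : Prop :=
  forall S : (Zomega -> Prop) -> Prop,
    sigma_algebra S -> (forall U, zopen U -> S U) -> S B.

(** Borel probability measures (values of mu outside Borel sets irrelevant) *)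
Definition borel_prob_measure (mu : (Zomega -> Prop) -> R) : Prop :=
  (forall B, borel B -> 0 <= mu B) /\
  mu (fun _ => True) = 1 /\
  (forall A : nat -> Zomega -> Prop,
     (forall n, borel (A n)) ->
     (forall m n x, m <> n -> A m x -> A n x -> False) ->
     infinite_sum (fun n => mu (A n)) (mu (fun x => exists n, A n x))).

Definition haar_null (A : Zomega -> Prop) : Prop :=
  exists B : Zomega -> Prop,
    borel B /\ (forall x, A x -> B x) /\
    exists mu, borel_prob_measure mu /\
      forall x : Zomega, mu (translate x B) = 0.

Definition is_metric {K : Type} (d : K -> K -> R) : Prop :=
  (forall x y, 0 <= d x y) /\
  (forall x y, d x y = 0 <-> x = y) /\
  (forall x y, d x y = d y x) /\
  (forall x y z, d x z <= d x y + d y z).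

Definition mopen {K : Type} (d : K -> K -> R) (U : K -> Prop) : Prop :=
  forall x, U x -> exists r, 0 < r /\ forall y, d x y < r -> U y.

Definition mcompact {K : Type} (d : K -> K -> R) : Prop :=
  forall (I : Type) (U : I -> K -> Prop),
    (forall i, mopen d (U i)) ->
    (forall k, exists i, U i k) ->
    exists l : list I, forall k, exists i, In i l /\ U i k.

Definition mcontinuous {K : Type} (d : K -> K -> R) (f : K -> Zomega) : Prop :=
  forall U, zopen U -> mopen d (fun k => U (f k)).

Definition nowhere_dense {K : Type} (d : K -> K -> R) (N : K -> Prop) : Prop :=
  forall U, mopen d U -> (exists k, U k) ->
    exists V, mopen d V /\ (exists k, V k) /\
      (forall k, V k -> U k) /\ (forall k, V k -> ~ N k).

Definition meager {K : Type} (d : K -> K -> R) (M : K -> Prop) : Prop :=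
  exists N : nat -> K -> Prop,
    (forall n, nowhere_dense d (N n)) /\
    (forall k, M k -> exists n, N n k).

Definition haar_meager (A : Zomega -> Prop) : Prop :=
  exists B : Zomega -> Prop,
    borel B /\ (forall x, A x -> B x) /\
    exists (K : Type) (d : K -> K -> R) (f : K -> Zomega),
      is_metric d /\ mcompact d /\ inhabited K /\ mcontinuous d f /\
      forall x : Zomega, meager d (fun k => translate x B (f k)).

(* Main.v *)
Require Import Defs.
From Stdlib Require Import Reals ZArith List Lia Lra Classical ClassicalEpsilon FunctionalExtensionality.
Open Scope R_scope.

Lemma half_pos n : 0 < (/2)^n.
Proof. apply pow_lt; lra. Qed.

Lemma half_lt_S n : (/2)^(S n) < (/2)^n.
Proof. simpl. pose proof (half_pos n). lra. Qed.

Lemma half_lt m p : (m < p)%nat -> (/2)^p < (/2)^m.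
Proof.
  induction 1.
  - apply half_lt_S.
  - eapply Rlt_trans; [apply half_lt_S| exact IHle].
Qed.

Lemma half_lt_iff m p : (/2)^p < (/2)^m <-> (m < p)%nat.
Proof.
  split; [|apply half_lt].
  intros H. destruct (Nat.lt_ge_cases m p) as [|Hc]; auto.
  destruct (Nat.eq_dec m p) as [->|Hn]; [lra|].
  assert (p < m)%nat by lia. pose proof (half_lt _ _ H0). lra.
Qed.

Lemma half_small r : 0 < r -> exists m, (/2)^m < r.
Proof.
  intros Hr. destruct (pow_lt_1_zero (/2)) with (y := r) as [N HN]; auto.
  rewrite Rabs_right; lra.
  exists N. specialize (HN N (le_n _)). rewrite Rabs_right in HN; auto.
  left; apply half_pos.
Qed.

Definition K := nat -> bool.

Definition fdspec (a b : K) (p : nat) := a p <> b p /\ forall i, (i < p)%nat -> a i = b i.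

Lemma fd_exists (a b : K) : a <> b -> exists p, fdspec a b p.
Proof.
  intros Hab.
  assert (exists n, a n <> b n) as [n Hn].
  { apply NNPP; intro H. apply Hab. apply functional_extensionality. intro x.
    apply NNPP; intro H'. apply H. eauto. }
  revert Hn. induction n as [n IH] using (well_founded_induction lt_wf).
  intros Hn. destruct (classic (forall i, (i < n)%nat -> a i = b i)) as [Hall|Hnot].
  - exists n; split; auto.
  - apply not_all_ex_not in Hnot as [i Hi].
    apply imply_to_and in Hi as [Hi1 Hi2]. eauto.
Qed.

Definition d (a b : K) : R :=
  match excluded_middle_informative (a = b) with
  | left _ => 0
  | right H => (/2)^(proj1_sig (constructive_indefinite_description _ (fd_exists a b H)))
  end.

Lemma d_cases a b : (a = b /\ d a b = 0) \/ (a <> b /\ exists p, fdspec a b p /\ d a b = (/2)^p).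
Proof.
  unfold d. destruct (excluded_middle_informative (a = b)) as [E|H]; [left; auto|right].
  split; auto. destruct (constructive_indefinite_description _ (fd_exists a b H)) as [p Hp].
  simpl. eauto.
Qed.

Lemma fdspec_unique a b p q : fdspec a b p -> fdspec a b q -> p = q.
Proof.
  intros [H1 H2] [H3 H4].
  destruct (Nat.lt_total p q) as [h|[h|h]]; auto.
  - exfalso; apply H1, H4, h.
  - exfalso; apply H3, H2, h.
Qed.

Lemma d_lt a b m : d a b < (/2)^m <-> (forall i, (i <= m)%nat -> a i = b i).
Proof.
  destruct (d_cases a b) as [[-> ->]|[Hn [p [[H1 H2] ->]]]].
  - split; auto. intros _. apply half_pos.
  - rewrite half_lt_iff. split.
    + intros Hlt i Hi. apply H2. lia.
    + intros Hall. destruct (Nat.lt_ge_cases m p); auto.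
      exfalso. apply H1, Hall. auto.
Qed.

Lemma d_nonneg a b : 0 <= d a b.
Proof.
  destruct (d_cases a b) as [[_ ->]|[_ [p [_ ->]]]]. lra. left; apply half_pos.
Qed.

Lemma d_refl a : d a a = 0.
Proof. destruct (d_cases a a) as [[_ ->]|[H _]]; tauto. Qed.

Lemma d_sym a b : d a b = d b a.
Proof.
  destruct (d_cases a b) as [[-> ->]|[Hn [p [Hp ->]]]].
  - reflexivity.
  - destruct (d_cases b a) as [[E _]|[Hn' [q [Hq ->]]]]; [congruence|].
    f_equal. apply (fdspec_unique a b). auto.
    destruct Hq as [H1 H2]. split; auto. intros i Hi. symmetry; auto.
Qed.

Lemma d_metric : is_metric d.
Proof.
  split; [exact d_nonneg|split; [|split; [exact d_sym|]]].
  - intros x y. split; [|intros ->; apply d_refl].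
    destruct (d_cases x y) as [[E _]|[_ [p [_ ->]]]]; auto.
    intros H. pose proof (half_pos p). lra.
  - intros a b c.
    destruct (d_cases a c) as [[-> _]|[Hn [p [[H1 _] E]]]].
    + rewrite d_refl. pose proof (d_nonneg c b). pose proof (d_nonneg b c). lra.
    + pose proof (d_nonneg a b). pose proof (d_nonneg b c).
      destruct (Rlt_le_dec (d a b) (d a c)) as [h1|h1]; [|lra].
      destruct (Rlt_le_dec (d b c) (d a c)) as [h2|h2]; [|lra].
      rewrite E in h1, h2. rewrite d_lt in h1, h2.
      exfalso. apply H1. rewrite h1, h2; auto.
Qed.

Lemma ball_open k r : mopen d (fun y => d k y < r).
Proof.
  intros y Hy. exists (r - d k y). split; [lra|].
  intros z Hz. destruct d_metric as [_ [_ [_ T]]]. specialize (T k y z). lra.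
Qed.

Section Compact.
Variables (I : Type) (U : I -> K -> Prop).
Hypothesis Uopen : forall i, mopen d (U i).
Hypothesis Ucov : forall k, exists i, U i k.

Definition ext (s : list bool) (k : K) := forall i, (i < length s)%nat -> k i = nth i s false.
Definition covered s := exists l : list I, forall k, ext s k -> exists i, In i l /\ U i k.

Lemma covered_split s : covered (s ++ false :: nil) -> covered (s ++ true :: nil) -> covered s.
Proof.
  intros [l1 H1] [l2 H2]. exists (l1 ++ l2). intros k Hk.
  assert (Hb : ext (s ++ k (length s) :: nil) k).
  { intros i Hi. rewrite length_app in Hi; simpl in Hi.
    destruct (Nat.lt_ge_cases i (length s)).
    - rewrite app_nth1; auto.
    - assert (i = length s) by lia. subst. rewrite app_nth2, Nat.sub_diag; auto. }
  destruct (k (length s)) eqn:E.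
  - destruct (H2 k Hb) as [i [Hi Hu]]. exists i; split; auto. apply in_or_app; auto.
  - destruct (H1 k Hb) as [i [Hi Hu]]. exists i; split; auto. apply in_or_app; auto.
Qed.

Fixpoint pre (n : nat) : list bool :=
  match n with
  | O => nil
  | S n => if excluded_middle_informative (covered (pre n ++ false :: nil))
           then pre n ++ true :: nil else pre n ++ false :: nil
  end.

Lemma pre_len n : length (pre n) = n.
Proof.
  induction n; simpl; auto. destruct excluded_middle_informative;
  rewrite length_app; simpl; lia.
Qed.

Lemma pre_bad n : ~ covered nil -> ~ covered (pre n).
Proof.
  intros H0. induction n; simpl; auto.
  destruct excluded_middle_informative as [c|c]; auto.
  intro c'. apply IHn. apply covered_split; auto.
Qed.

Lemma pre_prefix n j : exists t, pre (n + j) = pre n ++ t.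
Proof.
  induction j.
  - exists nil. rewrite Nat.add_0_r, app_nil_r. auto.
  - destruct IHj as [t Ht]. rewrite Nat.add_succ_r. simpl.
    rewrite Ht. destruct excluded_middle_informative;
    [exists (t ++ true :: nil)| exists (t ++ false :: nil)]; rewrite app_assoc; auto.
Qed.

Definition kstar : K := fun i => nth i (pre (S i)) false.

Lemma kstar_ext n : ext (pre n) kstar.
Proof.
  intros i Hi. rewrite pre_len in Hi. unfold kstar.
  destruct (pre_prefix (S i) (n - S i)) as [t Ht].
  replace (S i + (n - S i))%nat with n in Ht by lia. rewrite Ht.
  rewrite app_nth1; auto. rewrite pre_len; lia.
Qed.

Lemma cantor_cover : covered nil.
Proof.
  apply NNPP; intro H0.
  destruct (Ucov kstar) as [i Hi].
  destruct (Uopen i kstar Hi) as [r [Hr Hball]].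
  destruct (half_small r Hr) as [m Hm].
  apply (pre_bad (S m) H0). exists (i :: nil). intros k Hk.
  exists i; split; [left; auto|]. apply Hball.
  apply Rlt_trans with ((/2)^m); auto. apply d_lt. intros j Hj.
  rewrite (kstar_ext (S m)), Hk; auto; rewrite pre_len; lia.
Qed.

End Compact.

Lemma d_compact : mcompact d.
Proof.
  intros I U Uo Uc. destruct (cantor_cover I U Uo Uc) as [l Hl].
  exists l. intros k. apply Hl. intros i Hi. simpl in Hi. lia.
Qed.


Definition M (n : nat) : Z := Z.of_nat (2 ^ n).

Lemma M_pos n : (0 < M n)%Z.
Proof. unfold M. pose proof (Nat.pow_nonzero 2 n). lia. Qed.

Definition Pn (N n : nat) (y : Zomega) : Prop := (N <= n)%nat /\ Z.modulo (y n) (M n) = 0%Z.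

Definition Aset : Zomega -> Prop := fun y => ~ (exists N, ~ (exists n, Pn N n y)).
Definition Cset : Zomega -> Prop := fun y => ~ Aset y.

Lemma Aset_iff y : Aset y <-> forall N, exists n, Pn N n y.
Proof.
  unfold Aset. split.
  - intros H N. apply NNPP. intro H'. apply H. eauto.
  - intros H [N HN]. apply HN, H.
Qed.

Lemma Pn_open N n : zopen (Pn N n).
Proof.
  intros x Hx. exists (S n). intros y Hy. unfold Pn in *. rewrite Hy; auto.
Qed.

Lemma borel_open U : zopen U -> borel U.
Proof. intros HU S _ HS. auto. Qed.

Lemma borel_compl A : borel A -> borel (fun x => ~ A x).
Proof. intros HA S HS HO. apply (proj1 (proj2 HS)). apply HA; assumption. Qed.

Lemma borel_union (A : nat -> Zomega -> Prop) : (forall n, borel (A n)) -> borel (fun x => exists n, A n x).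
Proof. intros HA S HS HO. apply (proj2 (proj2 HS)). intro n. apply HA; assumption. Qed.

Lemma Aset_borel : borel Aset.
Proof.
  unfold Aset. apply borel_compl.
  apply (borel_union (fun N x => ~ (exists n, Pn N n x))). intro N.
  apply borel_compl. apply (borel_union (fun n => Pn N n)). intro n.
  apply borel_open, Pn_open.
Qed.

Lemma Cset_borel : borel Cset.
Proof. apply borel_compl, Aset_borel. Qed.

Lemma translate_open x U : zopen U -> zopen (translate x U).
Proof.
  intros HU y Hy. destruct (HU _ Hy) as [n Hn]. exists n. intros z Hz.
  apply Hn. intros i Hi. unfold zsub. rewrite Hz; auto.
Qed.

Lemma borel_translate x B : borel B -> borel (translate x B).
Proof.
  intros HB S HS HO.
  apply (HB (fun B => S (translate x B))).
  - destruct HS as [H1 [H2 H3]]. split; [|split].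
    + exact H1.
    + intros A HA. exact (H2 _ HA).
    + intros A HA. exact (H3 _ HA).
  - intros U HU. apply HO, translate_open, HU.
Qed.

Fixpoint cnt (k : K) (a l : nat) : nat :=
  match l with
  | O => O
  | S l' => ((if k (a + l')%nat then 1 else 0) + cnt k a l')%nat
  end.

Lemma cnt_ext k k' a l : (forall i, (a <= i < a + l)%nat -> k i = k' i) -> cnt k a l = cnt k' a l.
Proof.
  induction l; simpl; intros H; auto.
  rewrite H by lia. rewrite IHl; auto. intros i Hi; apply H; lia.
Qed.

Lemma cnt_thr k a l r : (forall i, (a <= i < a + l)%nat -> k i = Nat.ltb i (a + r)) ->
  cnt k a l = Nat.min r l.
Proof.
  induction l; simpl; intros H. lia.
  rewrite H by lia. rewrite IHl by (intros i Hi; apply H; lia).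
  destruct (Nat.ltb (a + l) (a + r)) eqn:E.
  - apply Nat.ltb_lt in E. lia.
  - apply Nat.ltb_ge in E. lia.
Qed.

Definition fK (k : K) : Zomega := fun n => Z.of_nat (cnt k (2 ^ n) (2 ^ n)).

Lemma pow2_S n : (2 ^ S n = 2 ^ n + 2 ^ n)%nat.
Proof. simpl. lia. Qed.

Lemma lt_pow2 n : (n < 2 ^ n)%nat.
Proof. induction n; simpl; lia. Qed.

Lemma fK_agree k k' n : (forall i, (i <= 2 ^ n)%nat -> k i = k' i) ->
  forall i, (i < n)%nat -> fK k i = fK k' i.
Proof.
  intros H i Hi. unfold fK. f_equal. apply cnt_ext. intros j Hj. apply H.
  assert (2 ^ S i <= 2 ^ n)%nat by (apply Nat.pow_le_mono_r; lia).
  rewrite pow2_S in H0. lia.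
Qed.

Lemma fK_cont : mcontinuous d fK.
Proof.
  intros U HU k Hk. destruct (HU _ Hk) as [n Hn].
  exists ((/2)^(2^n)). split; [apply half_pos|].
  intros y Hy. apply Hn. rewrite d_lt in Hy.
  intros i Hi. symmetry. apply (fK_agree k y n); auto.
Qed.

Lemma mod_self_sub a m : (0 < m)%Z -> ((a mod m - a) mod m = 0)%Z.
Proof.
  intros Hm. rewrite Zminus_mod, Z.mod_mod, Z.sub_diag by lia. apply Z.mod_0_l. lia.
Qed.

Lemma meager_part (x : Zomega) : meager d (fun k => translate x Cset (fK k)).
Proof.
  exists (fun N k => forall n, (N <= n)%nat -> ((fK k n - x n) mod M n <> 0)%Z).
  split.
  - intros N U HU [k0 Hk0].
    destruct (HU k0 Hk0) as [r [Hr Hball]].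
    destruct (half_small r Hr) as [m Hm].
    set (n := (N + m + 1)%nat).
    set (Rn := Z.to_nat (x n mod M n)).
    assert (HR : (0 <= x n mod M n < M n)%Z) by (apply Z.mod_pos_bound, M_pos).
    assert (HRn : (Rn < 2 ^ n)%nat) by (unfold Rn, M in *; lia).
    set (k1 := fun i => if Nat.ltb i (2 ^ n) then k0 i else Nat.ltb i (2 ^ n + Rn)).
    assert (Hf1 : fK k1 n = (x n mod M n)%Z).
    { unfold fK. rewrite (cnt_thr _ _ _ Rn).
      - unfold Rn. rewrite Nat.min_l by lia. lia.
      - intros i Hi. unfold k1. destruct (Nat.ltb i (2 ^ n)) eqn:E; auto.
        apply Nat.ltb_lt in E; lia. }
    exists (fun k => d k1 k < (/2)^(2 ^ S n)). split; [apply ball_open|split; [|split]].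
    + exists k1. rewrite d_refl. apply half_pos.
    + intros k Hk. apply Hball. apply Rlt_trans with ((/2)^m); auto.
      apply d_lt. intros i Hi. rewrite d_lt in Hk. rewrite <- Hk.
      * unfold k1. assert (m < 2 ^ n)%nat by (pose proof (lt_pow2 n); unfold n in *; lia).
        destruct (Nat.ltb i (2 ^ n)) eqn:E; auto. apply Nat.ltb_ge in E. lia.
      * assert (m < 2 ^ n)%nat by (pose proof (lt_pow2 n); unfold n in *; lia).
        rewrite pow2_S. lia.
    + intros k Hk Hbad. rewrite d_lt in Hk. apply (Hbad n).
      * unfold n; lia.
      * rewrite <- (fK_agree k1 k (S n)); auto. rewrite Hf1. apply mod_self_sub, M_pos.
  - intros k Hk. unfold translate, Cset in Hk. rewrite Aset_iff in Hk.
    apply not_all_ex_not in Hk as [N HN]. exists N. intros n Hn Hm.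
    apply HN. exists n. split; auto.
Qed.

Lemma haar_meager_C : haar_meager Cset.
Proof.
  exists Cset. split; [apply Cset_borel|split; [auto|]].
  exists K, d, fK. split; [apply d_metric|split; [apply d_compact|split; [constructor; exact (fun _ => true)|split]]].
  - apply fK_cont.
  - apply meager_part.
Qed.


Definition floorZ (t : R) : Z := (up t - 1)%Z.

Lemma floor_spec t : IZR (floorZ t) <= t < IZR (floorZ t) + 1.
Proof.
  unfold floorZ. destruct (archimed t) as [H1 H2]. rewrite minus_IZR. lra.
Qed.

Lemma floor_unique t z : IZR z <= t < IZR z + 1 -> floorZ t = z.
Proof.
  intros [H1 H2]. unfold floorZ.
  assert (z + 1 = up t)%Z as E.
  { apply tech_up; rewrite plus_IZR; lra. }
  lia.
Qed.

Lemma floor_div_le s s' q : (0 < q)%Z ->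
  floorZ (s * IZR q) = floorZ (s' * IZR q) -> (floorZ s <= floorZ s')%Z.
Proof.
  intros Hq E. destruct (Z.le_gt_cases (floorZ s) (floorZ s')) as [h|h]; auto.
  exfalso. set (a := floorZ s) in *. set (b := floorZ s') in *. set (j := floorZ (s * IZR q)) in *.
  pose proof (floor_spec s) as [A1 A2]. pose proof (floor_spec s') as [B1 B2].
  pose proof (floor_spec (s * IZR q)) as [C1 C2]. pose proof (floor_spec (s' * IZR q)) as [D1 D2].
  fold a in A1, A2. fold b in B1, B2. fold j in C1, C2. rewrite <- E in D1, D2. fold j in D1, D2.
  assert (Qp : 0 < IZR q) by (apply IZR_lt; lia).
  assert (hb : IZR b + 1 <= IZR a) by (rewrite <- plus_IZR; apply IZR_le; lia).
  assert (h1 : IZR (a * q) < IZR (j + 1)).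
  { rewrite mult_IZR, plus_IZR. nra. }
  assert (h2 : IZR j < IZR (a * q)).
  { rewrite mult_IZR. nra. }
  apply lt_IZR in h1. apply lt_IZR in h2. lia.
Qed.

Lemma floor_div s s' q : (0 < q)%Z ->
  floorZ (s * IZR q) = floorZ (s' * IZR q) -> floorZ s = floorZ s'.
Proof.
  intros Hq E. apply Z.le_antisymm; apply floor_div_le with q; auto.
Qed.

Definition gR (t : R) : Zomega := fun n => floorZ (t * 2 ^ n).

Lemma two_pow_IZR k : 2 ^ k = IZR (Z.of_nat (2 ^ k)).
Proof. rewrite <- INR_IZR_INZ, pow_INR. simpl. f_equal. Qed.

Lemma g_level t t' m : floorZ (t * 2 ^ m) = floorZ (t' * 2 ^ m) ->
  forall i, (i <= m)%nat -> gR t i = gR t' i.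
Proof.
  intros E i Hi. unfold gR. apply floor_div with (Z.of_nat (2 ^ (m - i))).
  - pose proof (Nat.pow_nonzero 2 (m - i)). lia.
  - rewrite <- !two_pow_IZR, !Rmult_assoc, <- pow_add.
    replace (i + (m - i))%nat with m by lia. exact E.
Qed.

Lemma g_range t n : 0 <= t < 1 -> (0 <= gR t n < M n)%Z.
Proof.
  intros Ht. unfold gR, M. pose proof (floor_spec (t * 2 ^ n)) as [H1 H2].
  assert (P : 0 < 2 ^ n) by (apply pow_lt; lra).
  split.
  - assert (IZR (-1) < IZR (floorZ (t * 2 ^ n))) by (replace (IZR (-1)) with (-1) by reflexivity; nra).
    apply lt_IZR in H. lia.
  - apply lt_IZR. rewrite <- two_pow_IZR. nra.
Qed.

Lemma mod_eq_small a b m : (0 <= a < m)%Z -> ((a - b) mod m = 0)%Z -> a = (b mod m)%Z.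
Proof.
  intros Ha H. assert (Hm : (0 < m)%Z) by lia.
  rewrite Zminus_mod, (Z.mod_small a) in H by lia.
  pose proof (Z.mod_pos_bound b m Hm).
  apply Z.mod_divide in H; [|lia]. destruct H as [c Hc].
  set (r := (b mod m)%Z) in *. clearbody r.
  assert (c = 0%Z) by nia. subst. lia.
Qed.

Lemma div_le_iff x t p : 0 < p -> (x / p <= t <-> x <= t * p).
Proof.
  intros Hp. split; intro H.
  - apply Rmult_le_compat_r with (r := p) in H; [|lra].
    unfold Rdiv in H. rewrite Rmult_assoc, Rinv_l in H; lra.
  - apply Rmult_le_compat_r with (r := / p) in H; [|left; apply Rinv_0_lt_compat; lra].
    rewrite Rmult_assoc, Rinv_r in H; lra.
Qed.

Lemma lt_div_iff x t p : 0 < p -> (t < x / p <-> t * p < x).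
Proof.
  intros Hp. split; intro H.
  - apply Rmult_lt_compat_r with (r := p) in H; [|lra].
    unfold Rdiv in H. rewrite Rmult_assoc, Rinv_l in H; lra.
  - apply Rmult_lt_compat_r with (r := / p) in H; [|apply Rinv_0_lt_compat; lra].
    rewrite Rmult_assoc, Rinv_r in H; lra.
Qed.

Lemma g_eq_iff t n z : gR t n = z <-> IZR z / 2 ^ n <= t < (IZR z + 1) / 2 ^ n.
Proof.
  assert (P : 0 < 2 ^ n) by (apply pow_lt; lra).
  unfold gR. split.
  - intros <-. pose proof (floor_spec (t * 2 ^ n)) as [H1 H2].
    split; [apply div_le_iff | apply lt_div_iff]; lra.
  - intros [H1 H2]. apply floor_unique.
    apply div_le_iff in H1; [|lra]. apply lt_div_iff in H2; [|lra]. lra.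
Qed.

Definition dlo (n : nat) (z : Z) : R := IZR z / 2 ^ n.
Definition dhi (n : nat) (z : Z) : R := (IZR z + 1) / 2 ^ n.

Lemma dlo_lt_dhi n z : dlo n z < dhi n z.
Proof.
  unfold dlo, dhi. assert (P : 0 < 2 ^ n) by (apply pow_lt; lra).
  unfold Rdiv. apply Rmult_lt_compat_r; [apply Rinv_0_lt_compat|]; lra.
Qed.

Lemma dhi_dlo n z : dhi n z - dlo n z = (/ 2) ^ n.
Proof.
  unfold dlo, dhi. rewrite pow_inv. field. apply pow_nonzero. lra.
Qed.

Lemma geo_term k : (/2)^k = 2 / INR (2 ^ (k + 1)).
Proof.
  rewrite pow_INR, pow_inv, pow_add. replace (INR 2) with 2 by (simpl; lra). simpl. field. apply pow_nonzero. lra.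
Qed.

From mathcomp Require Import all_boot all_order all_algebra.
From mathcomp Require Import all_classical all_reals all_analysis.
From mathcomp Require Import Rstruct Rstruct_topology.
Import Order.TTheory GRing.Theory Num.Theory.
Local Open Scope classical_set_scope.
Local Open Scope ring_scope.

Definition I01 : set (measurableTypeR R) := `[0%R, 1%R[.

Lemma I01P t : I01 t <-> Rle 0 t /\ Rlt t 1.
Proof.
rewrite /I01 /= in_itv /=; split.
  by case/andP => /RleP ? /RltP ?.
by case => /RleP ? /RltP ?; apply/andP.
Qed.

Definition Dy n z : set (measurableTypeR R) := `[dlo n z, dhi n z[.

Lemma DyP n z t : Dy n z t <-> gR t n = z.
Proof.
rewrite g_eq_iff /Dy /= in_itv /=; split.
  by case/andP => /RleP ? /RltP ?.
by case => /RleP ? /RltP ?; apply/andP.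
Qed.

Definition G (S : Zomega -> Prop) : set (measurableTypeR R) := (fun t => S (gR t)) `&` I01.

Lemma measurable_I01 : measurable I01.
Proof. exact: measurable_itv. Qed.

Lemma G_sigma : Defs.sigma_algebra (fun S => measurable (G S)).
Proof.
split; [|split].
- rewrite /G (_ : (fun t => True) `&` I01 = I01); first exact: measurable_I01.
  by apply/seteqP; split => t //= [].
- move=> A mA.
  rewrite /G (_ : (fun t => ~ A (gR t)) `&` I01 = I01 `\` G A).
    exact: measurableD measurable_I01 mA.
  by apply/seteqP; split => t /=; [case => h1 h2; split => // -[]|case => h1 h2; split => //; move=> h; apply: h2].
- move=> A mA.
  rewrite /G (_ : (fun t => exists n, A n (gR t)) `&` I01 = \bigcup_n G (A n)).
    exact: bigcupT_measurable.
  by apply/seteqP; split => t /=; [case => -[n h1] h2; exists n|case => n _ [h1 h2]; split => //; exists n].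
Qed.

Lemma G_open U : zopen U -> measurable (G U).
Proof.
move=> oU.
pose Q n j := forall t, Dy n (Z.of_nat j) t -> I01 t -> U (gR t).
pose E n j := [set t | Dy n (Z.of_nat j) t /\ I01 t /\ Q n j].
have mE n j : measurable (E n j).
  have [q|nq] := pselect (Q n j).
    rewrite (_ : E n j = Dy n (Z.of_nat j) `&` I01).
      by apply: measurableI; [exact: measurable_itv|exact: measurable_I01].
    by apply/seteqP; split => t /=; [case => ? []|case => ? ?; split].
  rewrite (_ : E n j = set0) //.
  by apply/seteqP; split => t //= [? [? ?]].
rewrite (_ : G U = \bigcup_n \bigcup_j E n j).
  by apply: bigcupT_measurable => n; exact: bigcupT_measurable.
apply/seteqP; split => t /=.
- case => Ut It. have [n Hn] := oU _ Ut.
  have /I01P It' := It.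
  have [g0 _] := g_range t n It'.
  exists n => //; exists (Z.to_nat (gR t n)) => //.
  rewrite /E /=; split; first by apply/DyP; rewrite Z2Nat.id.
  split => // t' /DyP Dt' It'2.
  apply: Hn => i Hi.
  apply: (g_level t' t n) => //; last by apply/ssrnat.leP; rewrite ssrnat.leqNgt; apply/negP => /ssrnat.ltP; lia.
  by rewrite /gR in Dt'; rewrite Dt' Z2Nat.id.
- case => n _ [j _ [Dt [It q]]].
  by split => //; apply: q.
Qed.

Lemma G_borel B : Defs.borel B -> measurable (G B).
Proof. by move=> hB; apply: (hB (fun S => measurable (G S))); [exact: G_sigma|exact: G_open]. Qed.

Definition mu0 (S : Zomega -> Prop) : R := fine (lebesgue_measure (G S)).

Lemma leb_I01 : lebesgue_measure I01 = 1%:E.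
Proof. by rewrite /I01 lebesgue_measure_itv /= lte_fin ltr01 oppr0 adde0. Qed.

Lemma G_sub S : G S `<=` I01.
Proof. by move=> t []. Qed.

Lemma leb_fin S : measurable (G S) -> lebesgue_measure (G S) = (mu0 S)%:E.
Proof.
move=> mS; rewrite /mu0 fineK // ge0_fin_numE ?measure_ge0 //.
apply: (le_lt_trans (le_measure _ _ _ (G_sub S))); rewrite ?inE //.
  exact: measurable_I01.
by rewrite -[X in (X < _)%E]/(lebesgue_measure I01) leb_I01 ltry.
Qed.

Lemma G_bigcup (A : nat -> Zomega -> Prop) : G (fun x => exists n, A n x) = \bigcup_n G (A n).
Proof.
by apply/seteqP; split => t /=; [case => -[n h1] h2; exists n|case => n _ [h1 h2]; split => //; exists n].
Qed.

Lemma mu0_prob : borel_prob_measure mu0.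
Proof.
split; [|split].
- move=> B _; apply/RleP; exact: fine_ge0 (measure_ge0 _ _).
- rewrite /mu0 (_ : G (fun _ => True) = I01); last by apply/seteqP; split => t //= [].
  by rewrite -[X in fine X = _]/(lebesgue_measure I01) leb_I01.
- move=> A bA disj.
  have mF i : measurable (G (A i)) by apply: G_borel.
  have tF : trivIset setT (fun i => G (A i)).
    move=> i j _ _ [t [[h1 _] [h2 _]]].
    by apply/eqP/negPn/negP => /eqP ne; apply: (disj i j (gR t) ne h1 h2).
  have : (fun n => \sum_(0 <= i < n) lebesgue_measure (G (A i))) @ \oo -->
          lebesgue_measure (G (fun x => exists n, A n x)).
    rewrite G_bigcup; exact: measure_sigma_additive mF tF.
  rewrite leb_fin; last by apply: G_borel; exact: (borel_union A bA).
  rewrite (_ : (fun n => \sum_(0 <= i < n) lebesgue_measure (G (A i))) =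
               (fun n => (\sum_(0 <= i < n) mu0 (A i))%:E)); last first.
    apply/funext => n; rewrite -sumEFin; apply: eq_bigr => i _; exact: leb_fin.
  move/fine_cvg => /cvgrPdist_lt cv e /RltP epos.
  have [N _ HN] := cv e epos.
  exists N => n /ssrnat.leP Nn.
  rewrite RdistE sum_f_R0E distrC; apply/RltP.
  by apply: HN => /=; apply: (ssrnat.leq_trans Nn).
Qed.

Lemma powE m : Nat.pow 2 m = expn 2 m.
Proof. elim: m => // m IH. by rewrite expnS -IH. Qed.

Section Null.
Variable x : Zomega.
Definition rr n := Z.modulo (x n) (M n).
Definition Dn n := Dy n (rr n).

Lemma mDn n : measurable (Dn n).
Proof. exact: measurable_itv. Qed.

Lemma leb_Dn n : lebesgue_measure (Dn n) = (((/2)^n)%coqR)%:E.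
Proof.
rewrite /Dn /Dy lebesgue_measure_itv /= lte_fin.
have /RltP -> := dlo_lt_dhi n (rr n).
by rewrite -EFinD; congr (_%:E); exact (dhi_dlo n (rr n)).
Qed.

Lemma sum_Dn : (\sum_(n <oo) lebesgue_measure (Dn n) < +oo)%E.
Proof.
have Hs := @cvg_geometric_eseries_half R (IZR 2) 0.
have -> : (\sum_(n <oo) lebesgue_measure (Dn n))%E = (IZR 2 / 2 ^+ 0)%:E.
  apply: cvg_lim => //.
  move: Hs; rewrite /eseries.
  rewrite (_ : (fun n0 => \sum_(0 <= n < n0) lebesgue_measure (Dn n)) =
     (fun n => \sum_(0 <= k < n) ((IZR 2) / (2 ^ (k + 1))%:R)%:E)) //.
  apply/funext => n; apply: eq_bigr => k _.
  by rewrite leb_Dn geo_term INRE powE.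
by rewrite ltry.
Qed.

Lemma sub_limsup : G (translate x Aset) `<=` lim_sup_set Dn.
Proof.
move=> t [At It] N _.
have /I01P It' := It.
move/Aset_iff: At => /(_ N) [n [Nn Pn']].
exists n; first by apply/ssrnat.leP.
apply/DyP; rewrite /rr.
by apply: mod_eq_small => //; apply: g_range.
Qed.

Lemma mu0_null : mu0 (translate x Aset) = 0%R.
Proof.
have mG : measurable (G (translate x Aset)).
  apply: G_borel; apply: borel_translate; exact: Aset_borel.
have h0 := lim_sup_set_cvg0 (mu := lebesgue_measure) mDn sum_Dn.
have : (lebesgue_measure (G (translate x Aset)) <= 0)%E.
  rewrite -h0; apply: le_measure; rewrite ?inE //.
  - apply: bigcapT_measurable => k.
    by apply: bigcup_measurable => j _; exact: mDn.
  - exact: sub_limsup.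
rewrite leb_fin // lee_fin => h.
apply/eqP; rewrite eq_le h /=; exact: fine_ge0 (measure_ge0 _ _).
Qed.
End Null.

Theorem mainTheorem14 :
  exists A B : Zomega -> Prop,
    haar_null A /\ haar_meager B /\ (forall x : Zomega, A x \/ B x).
Proof.
exists Aset, Cset; split; [|split].
- exists Aset; split; first exact: Aset_borel.
  split; first by [].
  exists mu0; split; first exact: mu0_prob.
  by move=> x; apply: mu0_null.
- exact: haar_meager_C.
- move=> y; exact (Classical_Prop.classic (Aset y)).
Qed.
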